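(* There is a positive absolute constant $C_0$ such that for every $n\geq 2$, every domain $D$ in $\mathbb{R}^n$ such that $\mathbb{R}^n\setminus D$ contains at least two points, and all $z,w\in D$, $$d''_D(z,w)\leq d'_D(z,w)\leq d_D(z,w)\leq C_0\, d''_D(z,w).$$
   Context: Write $d(z,\partial D)=\inf\{|z-a|:a\in\partial D\}$ and $Q(z;a,b)=|z-a|\big(1+\big|\log\frac{|a-b|}{|z-a|}\big|\big)$ (equal to $+\infty$ when $a=b$). For $z\in D$ define $1/\lambda_D(z)=\inf\{Q(z;a,b): a,b\in\mathbb{R}^n\setminus D\}$, $1/\lambda'_D(z)=\inf\{Q(z;a,b): a,b\in\partial D\}$, $1/\lambda''_D(z)=\inf\{Q(z;a,b): a,b\in\partial D,\ |z-a|=d(z,\partial D)\}$. For $z,w\in D$ set $d_D(z,w)=\inf_\gamma\int_\gamma\lambda_D(t)|dt|$, $d'_D(z,w)=\inf_\gamma\int_\gamma\lambda'_D(t)|dt|$, $d''_D(z,w)=\inf_\gamma\int_\gamma\lambda''_D(t)|dt|$, the infima over all rectifiable arcs $\gamma$ joining $z$ to $w$ in $D$. *)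

(* Defs.v *)
(* R : realType, points of R^n are row vectors 'rV[R]_n
   with the EUCLIDEAN norm defined below. *)
From HB Require Import structures.
From mathcomp Require Import all_boot all_order all_algebra.
From mathcomp Require Import all_classical all_reals all_analysis.
Set Implicit Arguments. Unset Strict Implicit. Unset Printing Implicit Defensive.
Import Order.TTheory GRing.Theory Num.Theory.
Import numFieldNormedType.Exports.
Local Open Scope classical_set_scope.
Local Open Scope ring_scope.

Section Defs.
Context {R : realType} {n : nat}.
Implicit Types (x y z a b : 'rV[R]_n) (D : set 'rV[R]_n).

Definition enorm x : R := Num.sqrt (\sum_(i < n) (x ord0 i) ^+ 2).

Definition bdry D : set 'rV[R]_n := closure D `\` interior D.

Definition dist_bdry D z : R := inf [set enorm (z - a) | a in bdry D].

(* Q(z;a,b) for a <> b  (Q = +oo when a = b; such pairs are excluded from the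
   infima below, which is the same as allowing the value +oo) *)
Definition Qf z a b : R := enorm (z - a) * (1 + `| ln (enorm (a - b) / enorm (z - a)) |).

Definition inv_lam D z : R :=
  inf [set r | exists a b, [/\ ~ D a, ~ D b, a <> b & r = Qf z a b]].
Definition inv_lam' D z : R :=
  inf [set r | exists a b, [/\ bdry D a, bdry D b, a <> b & r = Qf z a b]].
Definition inv_lam'' D z : R :=
  inf [set r | exists a b, [/\ bdry D a, enorm (z - a) = dist_bdry D z,
                               bdry D b, a <> b & r = Qf z a b]].

Definition lam D z : R := (inv_lam D z)^-1.
Definition lam' D z : R := (inv_lam' D z)^-1.
Definition lam'' D z : R := (inv_lam'' D z)^-1.

Definition curve_length (g : R -> 'rV[R]_n) (s t : R) : \bar R :=
  ereal_sup [set x | exists (k : nat) (p : nat -> R),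
    [/\ p 0%N = s, p k = t, (forall i, (i < k)%N -> p i <= p i.+1) &
        x = (\sum_(i < k) enorm (g (p i.+1) - g (p i)))%:E]].

Definition arclength_arc D z w (g : R -> 'rV[R]_n) (L : R) : Prop :=
  [/\ 0 <= L, g 0 = z /\ g L = w,
      (forall s, 0 <= s <= L -> D (g s)),
      ({in `[0, L] &, injective g}) &
      (forall s t, 0 <= s -> s <= t -> t <= L -> curve_length g s t = (t - s)%:E)].

Definition line_integral (f : 'rV[R]_n -> R) (g : R -> 'rV[R]_n) (L : R) : \bar R :=
  (\int[lebesgue_measure]_(s in `[0%R, L]%classic) (f (g s))%:E)%E.

Definition dens_metric (f : 'rV[R]_n -> R) D z w : \bar R :=
  ereal_inf [set x | exists (g : R -> 'rV[R]_n) (L : R),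
    arclength_arc D z w g L /\ x = line_integral f g L].

Definition dD D := dens_metric (lam D) D.
Definition dD' D := dens_metric (lam' D) D.
Definition dD'' D := dens_metric (lam'' D) D.

End Defs.

(* Main.v *)
Require Import Defs.
From HB Require Import structures.
From mathcomp Require Import all_boot all_order all_algebra.
From mathcomp Require Import all_classical all_reals all_analysis.
From mathcomp Require Import ring lra.
Set Implicit Arguments. Unset Strict Implicit. Unset Printing Implicit Defensive.
Import Order.TTheory GRing.Theory Num.Theory.
Import numFieldNormedType.Exports.
Local Open Scope classical_set_scope.
Local Open Scope ring_scope.

Section Analytic.
Context {R : realType}.

Lemma ln_le_sub1 (y : R) : 0 < y -> ln y <= y - 1.
Proof.
move=> y0; have := @le_ln1Dx R (y - 1); rewrite [1 + _]addrC subrK; apply; lra.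
Qed.

Lemma ln4_le3 : ln (4 : R) <= 3.
Proof. by apply: le_trans (ln_le_sub1 _) _; lra. Qed.

Lemma ln4_ge0 : 0 <= ln (4 : R).
Proof. by apply: ln_ge0; lra. Qed.

Lemma key (d ra s t : R) : 0 < d -> d <= ra -> 0 < s ->
  Num.min d s / 4 <= t -> t <= 3 * ra + s ->
  d * (1 + `|ln (t / d)|) <= 6 * (ra * (1 + `|ln (s / ra)|)).
Proof.
move=> d0 dra s0 tlo thi.
have ra0 : 0 < ra by apply: lt_le_trans d0 dra.
have m0 : 0 < Num.min d s by rewrite lt_min d0.
have t0 : 0 < t by apply: lt_le_trans tlo; rewrite divr_gt0.
have pos x : 0 < x -> x \is Num.pos by [].
have p4 : (4 : R) \is Num.pos by rewrite posrE; lra.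
rewrite !ln_div ?pos //.
set Ld := ln d; set Lr := ln ra; set Ls := ln s; set Lt := ln t.
set A := `|Ls - Lr|.
have A0 : 0 <= A := normr_ge0 _.
have hA1 : Ls - Lr <= A := ler_norm _.
have hA2 : Lr - Ls <= A by rewrite /A distrC ler_norm.
have F1 : d * (Lr - Ld) <= ra - d.
  rewrite -ln_div ?pos //.
  have := ln_le_sub1 (divr_gt0 ra0 d0).
  move=> h; have := ler_wpM2l (ltW d0) h.
  by rewrite mulrBr mulrCA divff ?gt_eqF // mulr1 mulr1.
have F2 : Ld <= Lr by rewrite /Ld /Lr ler_ln ?pos.
have l4 := ln4_le3; have l40 := ln4_ge0.
have claim : `|Lt - Ld| <= 3 + (Lr - Ld) + A.
  rewrite ler_norml; apply/andP; split.
    have hm : ln (Num.min d s) - ln 4 <= Lt.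
      rewrite -ln_div ?pos //.
      by rewrite /Lt ler_ln ?pos ?divr_gt0.
    have [ds|sd] := leP d s.
      have e : Num.min d s = d by apply/min_idPl.
      rewrite e -/Ld in hm; lra.
    have e : Num.min d s = s by apply/min_idPr/ltW.
    rewrite e -/Ls in hm; lra.
  have h34 : 3 * ra + s <= 4 * Num.max ra s.
    have h1 : ra <= Num.max ra s by rewrite le_max lexx.
    have h2 : s <= Num.max ra s by rewrite le_max lexx orbT.
    lra.
  have hM : Lt <= ln 4 + ln (Num.max ra s).
    have pM : Num.max ra s \is Num.pos by rewrite posrE lt_max ra0.
    rewrite -(lnM p4 pM).
    rewrite /Lt ler_ln ?pos //; last by rewrite mulr_gt0 // lt_max ra0.
    exact: le_trans thi h34.
  have [rs|sr] := leP ra s.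
    have e : Num.max ra s = s by apply/max_idPr.
    rewrite e -/Ls in hM; lra.
  have e : Num.max ra s = ra by apply/max_idPl/ltW.
  rewrite e -/Lr in hM; lra.
have hdA : d * A <= ra * A by rewrite ler_wpM2r.
have : d * (1 + `|Lt - Ld|) <= d * (4 + (Lr - Ld) + A).
  by rewrite ler_wpM2l ?(ltW d0) //; lra.
have e1 : d * (4 + (Lr - Ld) + A) = 4 * d + d * (Lr - Ld) + d * A by ring.
have e2 : 6 * (ra * (1 + A)) = 6 * ra + 6 * (ra * A) by ring.
have rA : 0 <= ra * A by rewrite mulr_ge0 // ltW.
rewrite e1 e2; lra.
Qed.

End Analytic.

Section Enorm.
Context {R : realType} {n : nat}.
Implicit Types (x y u v z a : 'rV[R]_n) (D : set 'rV[R]_n).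

Definition dotp u v : R := \sum_(i < n) u ord0 i * v ord0 i.

Lemma dotpC u v : dotp u v = dotp v u.
Proof. by apply: eq_bigr => i _; rewrite mulrC. Qed.

Lemma dotpDl u v x : dotp (u + v) x = dotp u x + dotp v x.
Proof. by rewrite /dotp -big_split; apply: eq_bigr => i _; rewrite !mxE mulrDl. Qed.

Lemma dotpZl k u v : dotp (k *: u) v = k * dotp u v.
Proof. by rewrite /dotp mulr_sumr; apply: eq_bigr => i _; rewrite !mxE mulrA. Qed.

Lemma dotpNl u v : dotp (- u) v = - dotp u v.
Proof. by rewrite -scaleN1r dotpZl mulN1r. Qed.

Lemma dotpBl u v x : dotp (u - v) x = dotp u x - dotp v x.
Proof. by rewrite dotpDl dotpNl. Qed.

Lemma dotpDr u v x : dotp x (u + v) = dotp x u + dotp x v.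
Proof. by rewrite dotpC dotpDl !(dotpC x). Qed.
Lemma dotpZr k u v : dotp u (k *: v) = k * dotp u v.
Proof. by rewrite dotpC dotpZl dotpC. Qed.
Lemma dotpNr u v : dotp u (- v) = - dotp u v.
Proof. by rewrite dotpC dotpNl dotpC. Qed.
Lemma dotpBr u v x : dotp x (u - v) = dotp x u - dotp x v.
Proof. by rewrite dotpDr dotpNr. Qed.

Lemma dotp_ge0 u : 0 <= dotp u u.
Proof. by apply: sumr_ge0 => i _; rewrite -expr2 sqr_ge0. Qed.

Lemma enormE u : enorm u = Num.sqrt (dotp u u).
Proof. by rewrite /enorm; congr Num.sqrt; apply: eq_bigr => i _; rewrite expr2. Qed.

Lemma enorm_ge0 u : 0 <= enorm u.
Proof. by rewrite enormE sqrtr_ge0. Qed.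

Lemma enorm_sq u : enorm u ^+ 2 = dotp u u.
Proof. by rewrite enormE sqr_sqrtr // dotp_ge0. Qed.

Lemma enorm_le_sq u c : 0 <= c -> dotp u u <= c ^+ 2 -> enorm u <= c.
Proof.
move=> c0 h; rewrite -(ler_pXn2r (_ : (0 < 2)%N)) ?nnegrE ?enorm_ge0 //.
by rewrite enorm_sq.
Qed.

Lemma enorm_ge_sq u c : 0 <= c -> c ^+ 2 <= dotp u u -> c <= enorm u.
Proof.
move=> c0 h; rewrite -(ler_pXn2r (_ : (0 < 2)%N)) ?nnegrE ?enorm_ge0 //.
by rewrite enorm_sq.
Qed.

Lemma CS u v : dotp u v ^+ 2 <= dotp u u * dotp v v.
Proof.
set A := dotp u u; set B := dotp u v; set C := dotp v v.
have hA : 0 <= A := dotp_ge0 u. have hC : 0 <= C := dotp_ge0 v.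
have e1 : dotp (C *: u - B *: v) (C *: u - B *: v) = C * (A * C - B ^+ 2).
  rewrite !(dotpBl, dotpBr, dotpZl, dotpZr) -/A -/B -/C (dotpC v u) -/B.
  by rewrite expr2; ring.
have e2 : dotp (B *: u - A *: v) (B *: u - A *: v) = A * (A * C - B ^+ 2).
  rewrite !(dotpBl, dotpBr, dotpZl, dotpZr) -/A -/B -/C (dotpC v u) -/B.
  by rewrite expr2; ring.
have h1 := dotp_ge0 (C *: u - B *: v); rewrite e1 in h1.
have h2 := dotp_ge0 (B *: u - A *: v); rewrite e2 in h2.
rewrite -subr_ge0.
have [Cp|] := ltP 0 C; first by rewrite -(pmulr_rge0 _ Cp).
move=> C0; have {C0}C0 : C = 0 by apply/eqP; rewrite eq_le C0 hC.
have [Ap|] := ltP 0 A; first by rewrite -(pmulr_rge0 _ Ap).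
move=> A0; have {A0}A0 : A = 0 by apply/eqP; rewrite eq_le A0 hA.
have h3 := dotp_ge0 (u - v); have h4 := dotp_ge0 (u + v).
rewrite !(dotpBl, dotpBr, dotpDl, dotpDr) -/A -/B -/C (dotpC v u) -/B in h3 h4.
have B0 : B = 0 by rewrite A0 C0 in h3 h4; lra.
by rewrite A0 B0 C0; lra.
Qed.


Lemma enorm0 : enorm (0 : 'rV[R]_n) = 0.
Proof. by rewrite enormE /dotp big1 ?sqrtr0 // => i _; rewrite mxE mul0r. Qed.

Lemma enormZ k u : enorm (k *: u) = `|k| * enorm u.
Proof.
rewrite !enormE dotpZl dotpZr mulrA -expr2 sqrtrM ?sqr_ge0 //.
by rewrite sqrtr_sqr.
Qed.

Lemma enormN u : enorm (- u) = enorm u.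
Proof. by rewrite -scaleN1r enormZ normrN normr1 mul1r. Qed.

Lemma enormB u v : enorm (u - v) = enorm (v - u).
Proof. by rewrite -enormN opprB. Qed.

Lemma dotp_le u v : `|dotp u v| <= enorm u * enorm v.
Proof.
rewrite -(ler_pXn2r (_ : (0 < 2)%N)) ?nnegrE ?mulr_ge0 ?enorm_ge0 //.
by rewrite real_normK ?num_real // exprMn !enorm_sq CS.
Qed.

Lemma enormD u v : enorm (u + v) <= enorm u + enorm v.
Proof.
apply: enorm_le_sq; first by rewrite addr_ge0 ?enorm_ge0.
rewrite !(dotpDl, dotpDr) (dotpC v u) sqrrD !enorm_sq.
have := dotp_le u v; rewrite ler_norml => /andP[_ h].
lra.
Qed.

Lemma enorm_tri u v w : enorm (u - w) <= enorm (u - v) + enorm (v - w).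
Proof. by rewrite (_ : u - w = (u - v) + (v - w)) ?enormD // addrA subrK. Qed.

Lemma coord_le u i : `|u ord0 i| <= enorm u.
Proof.
apply: enorm_ge_sq; first by [].
rewrite real_normK ?num_real // /dotp (bigD1 i) //= expr2 lerDl.
by apply: sumr_ge0 => j _; rewrite -expr2 sqr_ge0.
Qed.

Lemma mx_le_enorm u : `|u| <= enorm u.
Proof.
rewrite -[`|u|]/(mx_norm u) mx_normrE; apply: bigmax_le => [|ij _]; first exact: enorm_ge0.
by case: ij => a b /=; rewrite ord1; apply: coord_le.
Qed.

Lemma enorm_le_mx u : enorm u <= Num.sqrt n%:R * `|u|.
Proof.
apply: enorm_le_sq; first by rewrite mulr_ge0 ?sqrtr_ge0.
rewrite exprMn sqr_sqrtr // /dotp.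
have -> : n%:R * `|u| ^+ 2 = \sum_(i < n) `|u| ^+ 2.
  by rewrite sumr_const card_ord mulr_natl.
apply: ler_sum => i _; rewrite -expr2 -real_normK ?num_real //.
rewrite ler_pXn2r ?nnegrE //.
rewrite -[`|u|]/(mx_norm u) mx_normrE.
apply: le_trans (le_bigmax _ _ (ord0, i)) => //=.
Qed.

Lemma enorm_lip u v : `|enorm u - enorm v| <= enorm (u - v).
Proof.
have h1 := enorm_tri u v 0; have h2 := enorm_tri v u 0.
rewrite !subr0 in h1 h2; rewrite (enormB v u) in h2.
by rewrite ler_norml; apply/andP; split; lra.
Qed.

Lemma enorm_cont : continuous (@enorm R n).
Proof.
move=> x; apply/(@cvgrPdist_lt _ _ _ _ (@nbhs_filter _ x)) => e e0.
have d0 : 0 < e / (Num.sqrt n%:R + 1) by rewrite divr_gt0 // ltr_wpDl ?sqrtr_ge0.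
near=> y.
have : ball x (e / (Num.sqrt n%:R + 1)) y by near: y; exact: nbhsx_ballx.
rewrite -ball_normE /= => hy.
apply: le_lt_trans (enorm_lip _ _) _.
apply: le_lt_trans (enorm_le_mx _) _.
have hs : 0 <= Num.sqrt (n%:R : R) := sqrtr_ge0 _.
rewrite ltr_pdivlMr ?ltr_wpDl // in hy.
have hxy := normr_ge0 (x - y).
nra.
Unshelve. all: by end_near.
Qed.

Lemma enorm_dist_cont z : continuous (fun x : 'rV[R]_n => enorm (z - x)).
Proof.
move=> x; apply: (@continuous_comp _ _ _ (fun x => z - x) (@enorm R n)); last exact: enorm_cont.
by apply: (@cvgB _ _ _ _ (@nbhs_filter _ x)); [exact: cvg_cst | exact: cvg_id].
Qed.

Lemma open_enorm_ball D z : open D -> D z ->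
  exists2 r, 0 < r & forall a, enorm (z - a) < r -> D a.
Proof.
rewrite openE => /[apply]; rewrite /interior => /nbhs_ballP [r r0 hr].
exists r => // a ha; apply: hr; rewrite -ball_normE /=.
exact: le_lt_trans (mx_le_enorm _) ha.
Qed.

Lemma bdry_notD D a : open D -> bdry D a -> ~ D a.
Proof. by move=> /interior_id hD [_]; rewrite hD. Qed.

Lemma bdry_closed D : closed (bdry D).
Proof.
rewrite /bdry setDE; apply: closedI; first exact: closed_closure.
exact/open_closedC/open_interior.
Qed.

Lemma seg_bdry D x y : open D -> D x -> ~ D y ->
  exists t, [/\ 0 <= t, t <= 1 & bdry D (x + t *: (y - x))].
Proof.
move=> oD Dx Dy; apply: contrapT => hno.
pose f := fun t : R => x + t *: (y - x).
have fc : continuous f.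
  move=> t; apply: cvgD; first exact: cvg_cst.
  by apply: cvgZr_tmp; exact: cvg_id.
have cS : connected (f @` `[0, 1]).
  by apply: connected_continuous_connected; [exact: segment_connected | exact: continuous_subspaceT].
have sep : separated D (~` closure D).
  split; first by rewrite setICr.
  apply/seteqP; split => // p [Dp cp].
  have : (closure D)° p.
    by move: oD; rewrite openE => /(_ p Dp); apply: interiorS; apply: subset_closure.
  have := interiorC (~` closure D); rewrite setCK => -> /=; exact.
have sub : f @` `[0, 1] `<=` D `|` ~` closure D.
  move=> _ [t t01 <-]; rewrite /= in_itv /= in t01; case/andP: t01 => t0 t1.
  have [Dp|nDp] := pselect (D (f t)); first by left.
  right => cp; apply: hno; exists t; split => //; split => //.
  by move/interior_id : oD => ->.
have f1 : f 1 = y by rewrite /f scale1r addrC subrK.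
have f0 : f 0 = x by rewrite /f scale0r addr0.
have i1 : (1 : R) \in `[0, 1] by rewrite in_itv /= ler01 lexx.
have i0 : (0 : R) \in `[0, 1] by rewrite in_itv /= ler01 lexx.
case: (connected_subset sep sub cS) => h.
  by apply: Dy; rewrite -f1; apply: h; exists 1.
have := h x; rewrite -{1}f0 => /(_ (ex_intro2 _ _ 0 i0 erefl)); apply.
exact: subset_closure.
Qed.

Lemma nearest D z : (exists p, bdry D p) ->
  exists a0, bdry D a0 /\ forall b, bdry D b -> enorm (z - a0) <= enorm (z - b).
Proof.
case=> p bp; set c := enorm (z - p).
pose M := enorm z + c.
pose A := bdry D `&` [set x | enorm (z - x) <= c].
have cA : closed A.
  apply: closedI; first exact: bdry_closed.
  apply: (@preimage_closed _ _ (fun x => enorm (z - x)) [set r | r <= c]).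
    by move=> x _; exact: enorm_dist_cont.
  exact: closed_le.
have kA : compact A.
  have Mnco : compact [set v : 'rV[R]_n | forall i, v ord0 i \in `[(- M), M]].
    apply: (@rV_compact _  _ (fun=> `[(- M), M]%classic)).
    by move=> _; apply: segment_compact.
  apply: subclosed_compact cA Mnco _.
  move=> x [_ /= hx] i /=; rewrite in_itv /= -ler_norml.
  apply: le_trans (coord_le _ _) _.
  have := enorm_tri x z 0; rewrite !subr0 (enormB x z) /M; lra.
have A0 : A !=set0 by exists p; split => //=; rewrite lexx.
have cf : {within A, continuous (fun x => enorm (z - x))}.
  by apply: continuous_subspaceT; exact: enorm_dist_cont.
have [a0 a0A amin] := EVT_min_rV A0 kA cf.
rewrite inE in a0A; case: a0A => ba0 ha0.
exists a0; split => // b bb.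
have [hb|hb] := leP (enorm (z - b)) c.
  by apply: amin; rewrite inE.
by apply: le_trans ha0 (ltW hb).
Qed.

Lemma dist_bdryE D z a0 : bdry D a0 ->
  (forall b, bdry D b -> enorm (z - a0) <= enorm (z - b)) ->
  dist_bdry D z = enorm (z - a0).
Proof.
move=> ba hm; apply/eqP; rewrite eq_le; apply/andP; split.
  apply: ge_inf; last by exists a0.
  by exists 0 => _ [b _ <-]; exact: enorm_ge0.
by apply: lb_le_inf; [exists (enorm (z - a0)), a0 | move=> _ [b bb <-]; exact: hm].
Qed.

Lemma seg_rel x y a0 t :
  x + t *: (y - x) - a0 = (1 - t) *: (x - a0) + t *: (y - a0).
Proof. by apply/rowP => j; rewrite !mxE; ring. Qed.

Lemma seg_lower u v t m : 0 <= dotp u v -> 0 <= t -> t <= 1 -> 0 <= m ->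
  m <= enorm u -> m <= enorm v -> m / 2 <= enorm ((1 - t) *: u + t *: v).
Proof.
move=> huv t0 t1 m0 mu mv.
apply: enorm_ge_sq; first by rewrite divr_ge0.
rewrite !(dotpDl, dotpDr, dotpZl, dotpZr) (dotpC v u).
have hu : m ^+ 2 <= dotp u u.
  by rewrite -enorm_sq ler_pXn2r ?nnegrE ?enorm_ge0.
have hv : m ^+ 2 <= dotp v v.
  by rewrite -enorm_sq ler_pXn2r ?nnegrE ?enorm_ge0.
set A := dotp u u in hu *; set B := dotp u v in huv *; set C := dotp v v in hv *.
have h1 : 0 <= (1 - t) * t * B by rewrite mulr_ge0 // mulr_ge0 // subr_ge0.
have h2 : (1 - t) ^+ 2 * m ^+ 2 <= (1 - t) ^+ 2 * A by rewrite ler_wpM2l // sqr_ge0.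
have h3 : t ^+ 2 * m ^+ 2 <= t ^+ 2 * C by rewrite ler_wpM2l // sqr_ge0.
have h4 : 0 <= (t - 1/2) ^+ 2 * m ^+ 2 by rewrite mulr_ge0 // sqr_ge0.
rewrite expr_div_n.
nra.
Qed.

Lemma seg_upper u v t M : 0 <= t -> t <= 1 ->
  enorm u <= M -> enorm v <= M -> enorm ((1 - t) *: u + t *: v) <= M.
Proof.
move=> t0 t1 hu hv; apply: le_trans (enormD _ _) _.
rewrite !enormZ !ger0_norm ?subr_ge0 //.
nra.
Qed.

Fixpoint chainP (P : 'rV[R]_n -> 'rV[R]_n -> Prop) x (l : seq 'rV[R]_n) :=
  if l is y :: l' then P x y /\ chainP P y l' else True.

Lemma chain D P x l : open D -> D x -> ~ D (last x l) -> chainP P x l ->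
  exists p q t, [/\ P p q, 0 <= t, t <= 1 & bdry D (p + t *: (q - p))].
Proof.
move=> oD; elim: l x => [|y l IH] x Dx /= nDl; first by case: (nDl Dx).
case=> Pxy hc.
have [Dy|nDy] := pselect (D y); first exact: (IH y Dy nDl hc).
have [t [t0 t1 bt]] := seg_bdry oD Dx nDy.
by exists x, y, t.
Qed.

Lemma ortho_vec : (2 <= n)%N -> forall p : 'rV[R]_n,
  exists w, [/\ dotp p w = 0, enorm p / 2 <= enorm w & enorm w <= enorm p].
Proof.
move=> n2 p.
set d := enorm p.
have [d0|dp] := eqVneq d 0.
  by exists 0; rewrite /dotp big1 ?enorm0 ?d0 ?mul0r // => i _; rewrite mxE mulr0.
have i0n : (0 < n)%N by apply: leq_trans n2.
have i1n : (1 < n)%N by [].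
pose i0 := Ordinal i0n; pose i1 := Ordinal i1n.
have hk : exists k : 'I_n, (p ord0 k) ^+ 2 <= d ^+ 2 / 2.
  have hs : (p ord0 i0) ^+ 2 + (p ord0 i1) ^+ 2 <= d ^+ 2.
    rewrite enorm_sq /dotp (bigD1 i0) //= (bigD1 i1) //= addrA -!expr2 lerDl.
    by apply: sumr_ge0 => j _; rewrite -expr2 sqr_ge0.
  have [h|h] := leP ((p ord0 i0) ^+ 2) (d ^+ 2 / 2); first by exists i0.
  by exists i1; lra.
case: hk => k hk.
pose e := \row_(j < n) ((j == k)%:R : R).
have dpe : dotp p e = p ord0 k.
  rewrite /dotp (bigD1 k) //= big1 ?addr0; first by rewrite mxE eqxx mulr1.
  by move=> j /negbTE jk; rewrite mxE jk mulr0.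
have dee : dotp e e = 1.
  rewrite /dotp (bigD1 k) //= big1 ?addr0; first by rewrite mxE eqxx mulr1.
  by move=> j /negbTE jk; rewrite mxE jk mulr0.
pose w := d *: e - (p ord0 k / d) *: p.
have hpp : dotp p p = d ^+ 2 by rewrite enorm_sq.
have dpw : dotp p w = 0.
  rewrite /w dotpBr !dotpZr dpe hpp; field; exact: dp.
have dww : dotp w w = d ^+ 2 - (p ord0 k) ^+ 2.
  rewrite /w !(dotpBl, dotpBr, dotpZl, dotpZr) dpe dee hpp (dotpC e p) dpe.
  field; exact: dp.
have d0 : 0 <= d := enorm_ge0 p.
exists w; split => //.
  apply: enorm_ge_sq; first by rewrite divr_ge0.
  rewrite dww expr_div_n; have -> : (2:R) ^+ 2 = 4 by rewrite expr2; lra.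
  have := sqr_ge0 d; lra.
apply: enorm_le_sq => //; rewrite dww.
have := sqr_ge0 (p ord0 k); lra.
Qed.

Lemma far_bdry D a0 z c : (2 <= n)%N -> open D -> D z -> ~ D c ->
  exists b, [/\ bdry D b,
    Num.min (enorm (z - a0) / 2) (enorm (c - a0)) / 2 <= enorm (b - a0) &
    enorm (b - a0) <= enorm (z - a0) + enorm (c - a0)].
Proof.
move=> n2 oD Dz nDc.
set d := enorm (z - a0); set de := enorm (c - a0).
set m := Num.min (d / 2) de; set M := d + de.
have d0 : 0 <= d := enorm_ge0 _. have de0 : 0 <= de := enorm_ge0 _.
have mA : m <= d / 2 by rewrite /m ge_min lexx.
have mB : m <= de by rewrite /m ge_min lexx orbT.
have m0 : 0 <= m by rewrite /m le_min divr_ge0.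
pose P := fun p q : 'rV[R]_n => [/\ 0 <= dotp (p - a0) (q - a0), m <= enorm (p - a0),
  m <= enorm (q - a0), enorm (p - a0) <= M & enorm (q - a0) <= M].
suff [l [hl hc]] : exists l, last z l = c /\ chainP P z l.
  have nDl : ~ D (last z l) by rewrite hl.
  have [p [q [t [[h1 h2 h3 h4 h5] t0 t1 bt]]]] := chain oD Dz nDl hc.
  exists (p + t *: (q - p)); split => //; rewrite seg_rel.
    exact: seg_lower.
  exact: seg_upper.
have [hpq|hpq] := leP 0 (dotp (z - a0) (c - a0)).
  exists [:: c]; split => //=; split => //; rewrite /P -/d -/de /M; split => //; lra.
have [w [pw w1 w2]] := ortho_vec n2 (z - a0).
rewrite -/d in w1 w2.
exists [:: a0 + w; a0 - (z - a0); c]; split => //.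
have e1 : a0 + w - a0 = w by rewrite addrC addKr.
have e2 : a0 - (z - a0) - a0 = - (z - a0) by rewrite addrC addKr.
rewrite /= /P e1 e2 enormN -/d.
split; [split|split; [split|split => //]].
- by rewrite pw.
- lra.
- lra.
- rewrite /M; lra.
- rewrite /M; lra.
- by rewrite dotpNr dotpC pw oppr0.
- lra.
- lra.
- rewrite /M; lra.
- rewrite /M; lra.
- rewrite dotpNl oppr_ge0 -/de; split; [exact: ltW | lra | lra | rewrite /M; lra | rewrite /M; lra].
Qed.

End Enorm.

Section Integrals.
Context {R : realType} {n : nat}.
Local Open Scope ereal_scope.

Lemma LI_mono (f1 f2 : 'rV[R]_n -> R) g L :
  (forall s, (0 <= s)%R -> (s <= L)%R -> (0 <= f1 (g s) <= f2 (g s))%R) ->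
  line_integral f1 g L <= line_integral f2 g L.
Proof.
move=> h; rewrite /line_integral.
have h0 (f : 'rV[R]_n -> R) : (forall s, (0 <= s)%R -> (s <= L)%R -> (0 <= f (g s))%R) ->
    forall x, `[0%R, L]%classic x -> 0 <= (f (g x))%:E.
  by move=> hf x; rewrite /= in_itv /= => /andP[x0 xL]; rewrite lee_fin hf.
have p1 := h0 f1 (fun s s0 sL => proj1 (andP (h s s0 sL))).
have p2 : forall x, `[0%R, L]%classic x -> 0 <= (f2 (g x))%:E.
  by apply: h0 => s s0 sL; have /andP[a b] := h s s0 sL; apply: le_trans b.
rewrite !ge0_integralE //.
apply: ereal_sup_le => _ [u hu <-]; exists u => // x.
apply: le_trans (hu x) _; rewrite /patch; case: ifP => // /set_mem.
rewrite /= in_itv /= => /andP[x0 xL]; rewrite lee_fin.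
by have /andP[] := h x x0 xL.
Qed.

Lemma LI_scale (f : 'rV[R]_n -> R) g L k : (0 < k)%R ->
  (forall s, (0 <= s)%R -> (s <= L)%R -> (0 <= f (g s))%R) ->
  line_integral (fun x => k * f x)%R g L <= k%:E * line_integral f g L.
Proof.
move=> k0 h; rewrite /line_integral.
have hD x : `[0%R, L]%classic x -> (0 <= x)%R /\ (x <= L)%R.
  by rewrite /= in_itv /= => /andP[].
have p1 x : `[0%R, L]%classic x -> 0 <= (f (g x))%:E.
  by move=> /hD[x0 xL]; rewrite lee_fin h.
have p2 x : `[0%R, L]%classic x -> 0 <= (k * f (g x))%:E.
  by move=> /hD[x0 xL]; rewrite lee_fin mulr_ge0 ?h // ltW.
rewrite !ge0_integralE //.
apply: ge_ereal_sup => _ [u hu <-].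
have ki : (0 <= k^-1)%R by rewrite invr_ge0 ltW.
pose u' := scale_nnsfun u ki.
have eu : HBNNSimple.NonNegSimpleFun.sort u = (cst k \* HBNNSimple.NonNegSimpleFun.sort u')%R.
  apply/funext => x /=; rewrite /u' /= mulrA divff ?mul1r //.
  by rewrite gt_eqF.
rewrite eu sintegralrM; apply: lee_wpmul2l; first by rewrite lee_fin ltW.
apply: ereal_sup_ubound; exists u' => // x.
have := hu x; rewrite /patch; case: ifP => _; rewrite /u' /= !lee_fin.
  by move=> hx; rewrite ler_pdivrMl // mulrC.
by move=> hx; rewrite mulr_ge0_le0 // invr_ge0 ltW.
Qed.

End Integrals.

Section Main.
Context {R : realType} {n : nat}.
Implicit Types (x y z a b c : 'rV[R]_n) (D : set 'rV[R]_n).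

Lemma Qf_ge z a b : enorm (z - a) <= Qf z a b.
Proof.
rewrite /Qf -[X in X <= _]mulr1 ler_wpM2l ?enorm_ge0 //.
by rewrite lerDl normr_ge0.
Qed.

Lemma Qf_ge0 z a b : 0 <= Qf z a b.
Proof. exact: le_trans (enorm_ge0 _) (Qf_ge _ _ _). Qed.

Lemma enorm_gt0 x : x <> 0 -> 0 < enorm x.
Proof.
move=> x0; rewrite lt_def enorm_ge0 andbT; apply/eqP => e0; apply: x0.
apply/rowP => i; rewrite !mxE; apply/eqP; rewrite -normr_eq0 eq_le normr_ge0 andbT.
by rewrite -e0 coord_le.
Qed.

Lemma pointwise D z : (2 <= n)%N -> open D ->
  (exists a b, a <> b /\ ~ D a /\ ~ D b) -> D z ->
  [/\ 0 < inv_lam D z, inv_lam D z <= inv_lam' D z,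
      inv_lam' D z <= inv_lam'' D z & inv_lam'' D z <= 6 * inv_lam D z].
Proof.
move=> n2 oD [a1 [b1 [ab1 [na1 nb1]]]] Dz.
have [r r0 hr] := open_enorm_ball oD Dz.
have bne : exists p, bdry D p.
  by have [t [_ _ bt]] := seg_bdry oD Dz na1; exists (z + t *: (a1 - z)).
have [a0 [ba0 ha0]] := nearest z bne.
have dE := dist_bdryE ba0 ha0.
set d := enorm (z - a0) in dE ha0.
have dr : r <= d.
  by rewrite leNgt; apply/negP => /hr; exact: bdry_notD oD ba0.
have d0 : 0 < d by apply: lt_le_trans r0 dr.
have dle c : ~ D c -> d <= enorm (z - c).
  move=> nc; have [t [t0 t1 bt]] := seg_bdry oD Dz nc.
  apply: le_trans (ha0 _ bt) _.
  rewrite opprD addrA subrr sub0r enormN enormZ ger0_norm // enormB.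
  by rewrite -[X in _ <= X]mul1r ler_wpM2r ?enorm_ge0.
pose S'' := [set r | exists a b, [/\ bdry D a, enorm (z - a) = dist_bdry D z,
                               bdry D b, a <> b & r = Qf z a b]].
have main a b : ~ D a -> ~ D b -> a <> b -> exists2 y, S'' y & y <= 6 * Qf z a b.
  move=> na nb ab.
  set ra := enorm (z - a); set s := enorm (a - b).
  have s0 : 0 < s by apply: enorm_gt0 => /eqP; rewrite subr_eq0 => /eqP.
  have dra : d <= ra := dle a na.
  have [c [nc hc1 hc2]] : exists c, [/\ ~ D c, s / 2 <= enorm (c - a0) &
                                        enorm (c - a0) <= ra + s + d].
    have t1 := enorm_tri a z a0.
    rewrite (enormB a z) -/ra -/d in t1.
    have [h|h] := leP (s / 2) (enorm (a - a0)).
      by exists a; split => //; lra.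
    exists b; split => //.
      have := enorm_tri a a0 b; rewrite -/s (enormB a0 b); lra.
    have := enorm_tri b a a0; rewrite (enormB b a) -/s; lra.
  have [b' [bb' hlo hhi]] := far_bdry a0 n2 oD Dz nc.
  rewrite -/d in hlo hhi.
  set t := enorm (b' - a0) in hlo hhi.
  set de := enorm (c - a0) in hc1 hc2 hlo hhi.
  have hmd : Num.min d s <= d by rewrite ge_min lexx.
  have hms : Num.min d s <= s by rewrite ge_min lexx orbT.
  have hmm : Num.min d s / 2 <= Num.min (d / 2) de by rewrite le_min; apply/andP; split; lra.
  have tlo : Num.min d s / 4 <= t by lra.
  have t0 : 0 < t.
    apply: lt_le_trans tlo; apply: divr_gt0; [by rewrite lt_min d0 | lra].
  exists (Qf z a0 b').
    exists a0, b'; split => //; try by rewrite dE.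
    by move=> e; move: t0; rewrite /t -e subrr enorm0 ltxx.
  rewrite /Qf -/d (enormB a0 b') -/t.
  apply: key => //; rewrite -/ra -/s; lra.
pose S := [set r | exists a b, [/\ ~ D a, ~ D b, a <> b & r = Qf z a b]].
pose S' := [set r | exists a b, [/\ bdry D a, bdry D b, a <> b & r = Qf z a b]].
have lb0 (E : set R) : (forall q : R, E q -> 0 <= q) -> has_lbound E.
  by move=> h; exists 0 => q /h.
have lbS : has_lbound S by apply: lb0 => _ [a [b [_ _ _ ->]]]; exact: Qf_ge0.
have lbS' : has_lbound S' by apply: lb0 => _ [a [b [_ _ _ ->]]]; exact: Qf_ge0.
have lbS'' : has_lbound S'' by apply: lb0 => _ [a [b [_ _ _ _ ->]]]; exact: Qf_ge0.
have S''ne : S'' !=set0 by have [y Sy _] := main a1 b1 na1 nb1 ab1; exists y.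
have sub1 : S'' `<=` S' by move=> _ [a [b [h1 _ h3 h4 ->]]]; exists a, b.
have sub2 : S' `<=` S.
  by move=> _ [a [b [h1 h2 h3 ->]]]; exists a, b; split => //; exact: bdry_notD oD _.
have S'ne : S' !=set0 by case: S''ne => y /sub1 Sy; exists y.
have Sne : S !=set0 by case: S'ne => y /sub2 Sy; exists y.
have -> : inv_lam D z = inf S by [].
have -> : inv_lam' D z = inf S' by [].
have -> : inv_lam'' D z = inf S'' by [].
split.
- apply: lt_le_trans r0 _; apply: lb_le_inf => // _ [a [b [na _ _ ->]]].
  apply: le_trans (Qf_ge _ _ _); rewrite leNgt; apply/negP => /hr; exact: na.
- by apply: lb_le_inf => // x /sub2 Sx; exact: ge_inf.
- by apply: lb_le_inf => // x /sub1 Sx; exact: ge_inf.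
have : inf S'' / 6 <= inf S.
  apply: lb_le_inf => // _ [a [b [na nb ab ->]]].
  have [y Sy hy] := main a b na nb ab.
  have := ge_inf lbS'' Sy; lra.
lra.
Qed.

Lemma lam_cmp D z : (2 <= n)%N -> open D ->
  (exists a b, a <> b /\ ~ D a /\ ~ D b) -> D z ->
  [/\ 0 <= lam'' D z, lam'' D z <= lam' D z, lam' D z <= lam D z
    & lam D z <= 6 * lam'' D z].
Proof.
move=> n2 oD hab Dz.
have [h0 h1 h2 h3] := pointwise n2 oD hab Dz.
rewrite /lam /lam' /lam''.
set A := inv_lam D z in h0 h1 h3 *; set A' := inv_lam' D z in h1 h2 *.
set A'' := inv_lam'' D z in h2 h3 *.
have p (q : R) : 0 < q -> q \is Num.pos by [].
have A'0 : 0 < A' by apply: lt_le_trans h1.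
have A''0 : 0 < A'' by apply: lt_le_trans h2.
split.
- by rewrite invr_ge0 ltW.
- by rewrite lef_pV2 ?p.
- by rewrite lef_pV2 ?p.
have -> : A^-1 = 6 * (6 * A)^-1 by rewrite invfM mulrA divff ?mul1r //; lra.
apply: ler_wpM2l; first by lra.
have p6 : 0 < 6 * A by rewrite mulr_gt0 //; lra.
by rewrite lef_pV2 ?p.
Qed.

End Main.

Unset Implicit Arguments.

Theorem lemma6 (R : realType) :
  exists C0 : R, 0 < C0 /\
  forall (n : nat) (D : set 'rV[R]_n), (2 <= n)%N ->
    open D -> connected D ->
    (exists a b : 'rV[R]_n, a <> b /\ ~ D a /\ ~ D b) ->
    forall z w : 'rV[R]_n, D z -> D w ->
      [/\ (dD'' D z w <= dD' D z w)%E,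
          (dD' D z w <= dD D z w)%E &
          (dD D z w <= C0%:E * dD'' D z w)%E].
Proof.
exists 6; split; first by lra.
move=> n D n2 oD _ hab z w Dz Dw.
have hp x : D x -> _ := fun Dx => lam_cmp n2 oD hab Dx.
have arcD g L : arclength_arc D z w g L ->
    forall s, (0 <= s)%R -> (s <= L)%R -> D (g s).
  by case=> _ _ hD _ _ s s0 sL; apply: hD; rewrite s0 sL.
split.
- rewrite /dD'' /dD' /dens_metric; apply: le_ereal_inf_tmp => _ [g [L [arc ->]]].
  apply: le_trans (ereal_inf_lbound _) _; first by exists g, L.
  apply: LI_mono => s s0 sL; have [a1 a2 _ _] := hp _ (arcD _ _ arc s s0 sL).
  by rewrite a1 a2.
- rewrite /dD' /dD /dens_metric; apply: le_ereal_inf_tmp => _ [g [L [arc ->]]].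
  apply: le_trans (ereal_inf_lbound _) _; first by exists g, L.
  apply: LI_mono => s s0 sL; have [a1 a2 a3 _] := hp _ (arcD _ _ arc s s0 sL).
  by rewrite a3 (le_trans a1 a2).
rewrite /dD /dD'' /dens_metric -ereal_inf_pZl; last by lra.
apply: le_ereal_inf_tmp => _ [_ [g [L [arc ->]]] <-].
apply: le_trans (ereal_inf_lbound _) _; first by exists g, L.
apply: (@le_trans _ _ (line_integral (fun x => 6 * lam'' D x)%R g L)); last first.
  apply: LI_scale; first by lra.
  by move=> s s0 sL; have [a1 _ _ _] := hp _ (arcD _ _ arc s s0 sL).
apply: LI_mono => s s0 sL; have [a1 a2 a3 a4] := hp _ (arcD _ _ arc s s0 sL).
rewrite a4 andbT; apply: le_trans a3; exact: le_trans a2.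
Qed.
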